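(* Let $\ell\geq 1$ be an integer and $m=2\ell+1$. Then for every $\epsilon\in\mathrm{GF}(3)^*=\{1,2\}$, the equation $$(x^{3^\ell}+\epsilon)(x^{3^\ell}-x)=1$$ has no solution $x\in\mathrm{GF}(3^m)^*$.
   Context: $\mathrm{GF}(q)$ denotes the finite field with $q$ elements and $\mathrm{GF}(q)^*=\mathrm{GF}(q)\setminus\{0\}$. *)

(* Defs.v *)
From HB Require Import structures.
From mathcomp Require Import all_boot all_order all_algebra all_field.

(* Main.v *)
Require Import Defs.
From HB Require Import structures.
From mathcomp Require Import all_boot all_order all_algebra all_field.
From mathcomp Require Import ring.
Import GRing.Theory.
Local Open Scope ring_scope.

Section Aux.
Variable F : fieldType.
Hypothesis h3 : 3%:R = 0 :> F.

Lemma frobB3 (a b : F) : (a - b) ^+ 3 = a ^+ 3 - b ^+ 3.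
Proof.
have -> : (a - b) ^+ 3 = a ^+ 3 - b ^+ 3 + 3%:R * (a * b ^+ 2 - a ^+ 2 * b) by ring.
by rewrite h3 mul0r addr0.
Qed.

Lemma frobBk k (a b : F) : (a - b) ^+ (3 ^ k) = a ^+ (3 ^ k) - b ^+ (3 ^ k).
Proof.
elim: k a b => [|k IH] a b; first by rewrite !expr1.
by rewrite expnS !exprM frobB3 IH.
Qed.

Lemma natk k (e : nat) : (e = 1%N \/ e = 2%N) -> (e%:R : F) ^+ (3 ^ k) = e%:R.
Proof.
move=> he; elim: k => [|k IH]; first by rewrite expr1.
rewrite expnS exprM.
have -> : (e%:R : F) ^+ 3 = e%:R.
  case: he => ->; first by rewrite expr1n.
  have -> : (2%:R : F) ^+ 3 = 2%:R + 3%:R * 2%:R by ring.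
  by rewrite h3 mul0r addr0.
exact: IH.
Qed.
End Aux.

Theorem lemma1 (l : nat) (F : finFieldType) (e : nat) :
  (1 <= l)%N ->
  #|F| = (3 ^ (2 * l + 1))%N ->
  (e = 1%N \/ e = 2%N) ->
  ~ exists x : F, x != 0 /\
      (x ^+ (3 ^ l) + e%:R) * (x ^+ (3 ^ l) - x) = 1.
Proof.
move=> hl hF he [x [xn0 hx]].
have h3 : 3%:R = 0 :> F.
  by apply: pcharf0; apply: (card_finPcharP hF).
have hcard : forall a : F, a ^+ (3 ^ l * 3 ^ l * 3) = a.
  move=> a; have -> : (3 ^ l * 3 ^ l * 3 = #|F|)%N.
    by rewrite hF expnD expn1 mul2n -addnn expnD.
  exact: expf_card.
have one0 : (1 : F) != 0 by rewrite oner_eq0.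
set q := (3 ^ l)%N in hx hcard.
set eps : F := e%:R in hx.
have heps : eps ^+ q = eps by apply: natk.
set z := x ^+ q + eps in hx.
have zn0 : z != 0.
  apply/eqP=> z0; move: hx; rewrite z0 mul0r => /esym/eqP; by rewrite oner_eq0.
have hd : x ^+ q - x = z^-1.
  by rewrite -[x ^+ q - x]mul1r -(mulVf zn0) -mulrA hx mulr1.
have hxz : x = z - eps - z^-1.
  rewrite -hd /z; ring.
set w := z ^+ q.
have wn0 : w != 0 by rewrite expf_neq0.
have heqA : z = w - w^-1.
  have := congr1 (fun a => a ^+ q) hxz.
  rewrite /= !frobBk // heps exprVn -/w => H.
  have : x ^+ q = z - eps by rewrite /z; ring.
  rewrite H => H2.
  have -> : z = (z - eps) + eps by ring.
  rewrite -H2; ring.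
set u := w ^+ q.
have un0 : u != 0 by rewrite expf_neq0.
have heqB : w = u - u^-1.
  have := congr1 (fun a => a ^+ q) heqA.
  by rewrite /= !frobBk // exprVn.
have hu3 : u ^+ 3 = z.
  by rewrite /u /w -!exprM mulnA hcard.
have E1 : u ^+ 2 - 1 - w * u = 0.
  by rewrite heqB mulrBl mulVf // subrr; ring.
have E2 : u ^+ 3 * w - (w ^+ 2 - 1) = 0.
  by rewrite hu3 {1}heqA mulrBl mulVf // subrr; ring.
have P0 : (u ^+ 2) ^+ 3 + (u ^+ 2) ^+ 2 - 1 = 0.
  have -> : (u ^+ 2) ^+ 3 + (u ^+ 2) ^+ 2 - 1 =
    u ^+ 2 * (u ^+ 3 * w - (w ^+ 2 - 1)) +
    (u ^+ 2 - 1 - w * u) * (u ^+ 4 - (u ^+ 2 - 1) - w * u) +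
    3%:R * (u ^+ 4 - u ^+ 2) by ring.
  rewrite E1 E2 h3; ring.
set t := u ^+ 2 in P0.
have u26 : u ^+ 27 = u.
  have T13 : t ^+ 13 - 1 = 0.
    have -> : t ^+ 13 - 1 = (t ^+ 3 + t ^+ 2 - 1) *
      (4%:R - 3%:R * t + t ^+ 2 + t ^+ 3 - 2%:R * t ^+ 4 + 2%:R * t ^+ 5
       - t ^+ 6 + t ^+ 8 - t ^+ 9 + t ^+ 10) + 3%:R * (1 - t - t ^+ 2) by ring.
    rewrite P0 h3; ring.
  have -> : u ^+ 27 = u * (t ^+ 13 - 1) + u by rewrite /t; ring.
  by rewrite T13 mulr0 add0r.
have cyc : forall k, u ^+ (3 ^ k) = u \/ u ^+ (3 ^ k) = u ^+ 3 \/ u ^+ (3 ^ k) = u ^+ 9.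
  elim=> [|k [H|[H|H]]]; first by left; rewrite expr1.
  - by right; left; rewrite expnS mulnC exprM H.
  - by right; right; rewrite expnS mulnC exprM H -exprM.
  - by left; rewrite expnS mulnC exprM H -exprM.
have hw : w = u ^+ (3 ^ l.+1).
  by rewrite /w -hu3 -exprM expnS.
have E3 : u ^+ (3 ^ l.+1) * u - (u ^+ 2 - 1) = 0.
  rewrite -hw; have -> : w * u - (u ^+ 2 - 1) = - (u ^+ 2 - 1 - w * u) by ring.
  by rewrite E1 oppr0.
suff : (1 : F) = 0 by move/eqP; rewrite oner_eq0.
case: (cyc l.+1) => [H|[H|H]]; rewrite H in E3.
- have -> : (1 : F) = u * u - (u ^+ 2 - 1) by ring.
  exact: E3.
- have -> : (1 : F) = (1 + 2%:R * t) * (t ^+ 3 + t ^+ 2 - 1) +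
     (2%:R + t + t ^+ 2) * (u ^+ 3 * u - (u ^+ 2 - 1))
     - 3%:R * (- t + t ^+ 2 + t ^+ 3 + t ^+ 4) by rewrite /t; ring.
  rewrite P0 E3 h3; ring.
- have -> : (1 : F) = (t ^+ 2 + t ^+ 3 + t ^+ 4) * (t ^+ 3 + t ^+ 2 - 1) +
     (1 + t + 2%:R * t ^+ 2) * (u ^+ 9 * u - (u ^+ 2 - 1))
     - 3%:R * (- t ^+ 3 + t ^+ 5 + t ^+ 6 + t ^+ 7) by rewrite /t; ring.
  rewrite P0 E3 h3; ring.
Qed.
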